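(* Let $S^1=[0,1)$ with addition mod 1 and $T(x)=2x\pmod 1$. Let $\mu$ be the Gibbs probability for $\log J$, where $J:S^1\to\mathbb{R}$ is positive, Hölder continuous, with $\sum_{x:\,T(x)=y}J(x)=1$ for all $y$. For $n\in\mathbb{N}$ let $\nu_n=\mu*\mu*\cdots*\mu$ ($n$ factors). Then $\nu_n$ converges weakly, as $n\to\infty$, to the Lebesgue probability on $S^1$.
   Context: The Gibbs probability for $\log J$ is the probability $\mu$ with $\mathcal{L}_{\log J}^*\mu=\mu$, where $\mathcal{L}_{\log J}(\varphi)(y)=\sum_{x:\,T(x)=y}J(x)\varphi(x)$. Convolution: $\int\phi\,d(\eta*\mu)=\int\!\!\int\phi(x+y)\,d\mu(y)\,d\eta(x)$ (sums mod 1). *)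

(* Defs.v *)
From HB Require Import structures.
From mathcomp Require Import all_boot all_order all_algebra.
From mathcomp Require Import all_classical all_reals all_analysis.
Set Implicit Arguments. Unset Strict Implicit. Unset Printing Implicit Defensive.
Import Order.TTheory GRing.Theory Num.Theory.
Import numFieldNormedType.Exports.
Local Open Scope classical_set_scope.
Local Open Scope ring_scope.

(* The circle S^1 = [0,1) with addition mod 1 is modelled by R; functions on
   S^1 are 1-periodic functions on R, and probabilities on S^1 are
   probabilities on R carried by [0,1). *)
Definition periodic1 {R : realType} (f : R -> R) := forall x, f (x + 1) = f x.

(* Hölder continuity on the circle (for 1-periodic functions equivalent to
   Hölder continuity on R). *)
Definition holder {R : realType} (f : R -> R) :=
  exists C a : R, 0 < a /\ a <= 1 /\ 0 <= C /\
    forall x y, `|f x - f y| <= C * (`|x - y| `^ a).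

(* Transfer (Ruelle) operator for T(x) = 2x mod 1:
   L_{log J}(phi)(y) = sum_{x : T x = y} J x phi x. *)
Definition transfer {R : realType} (J phi : R -> R) (y : R) : R :=
  J (y / 2) * phi (y / 2) + J ((y + 1) / 2) * phi ((y + 1) / 2).

(* mu is the Gibbs probability for log J : L^* mu = mu, i.e.
   int (L phi) dmu = int phi dmu for every continuous phi on S^1. *)
Definition gibbs {R : realType} (J : R -> R) (mu : probability R R) :=
  mu `[0, 1[%classic = 1%E /\
  forall phi : R -> R, continuous phi -> periodic1 phi ->
    \int[mu]_(y in setT) transfer J phi y = \int[mu]_(y in setT) phi y.

(* Integral of phi against nu_n = mu * ... * mu (n factors), nu_0 = delta_0,
   nu_{n+1} = nu_n * mu, with
   int phi d(eta * mu) = int int phi(x + y) dmu(y) deta(x). *)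
Fixpoint conv_int {R : realType} (mu : probability R R) (n : nat)
    (phi : R -> R) : R :=
  match n with
  | 0 => phi 0
  | n.+1 => conv_int mu n (fun x => \int[mu]_(y in setT) phi (x + y))
  end.

(* Main.v *)
Require Import Defs.
From HB Require Import structures.
From mathcomp Require Import all_boot all_order all_algebra.
From mathcomp Require Import all_classical all_reals all_analysis.
From mathcomp Require Import ring lra.
Import Order.TTheory GRing.Theory Num.Theory.
Import numFieldNormedType.Exports.
Local Open Scope classical_set_scope.
Local Open Scope ring_scope.
Set Implicit Arguments. Unset Strict Implicit. Unset Printing Implicit Defensive.

Section Basics.
Context {R : realType}.
Implicit Types (f g : R -> R).

Lemma periodicN f : periodic1 f -> forall (n : nat) x, f (x + n%:R) = f x.
Proof.
move=> pf; elim=> [|n IH] x; first by rewrite addr0.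
by rewrite -natr1 addrA pf IH.
Qed.

Lemma periodicZ f : periodic1 f -> forall (k : int) x, f (x + k%:~R) = f x.
Proof.
move=> pf [n|n] x.
  have -> : (Posz n)%:~R = n%:R :> R by [].
  exact: (periodicN pf n x).
rewrite NegzE mulrNz.
have -> : (Posz n.+1)%:~R = n.+1%:R :> R by [].
have := periodicN pf n.+1 (x - n.+1%:R); rewrite subrK => <-.
by [].
Qed.

Lemma frac_itv (x : R) : 0 <= x - (Num.floor x)%:~R < 1.
Proof.
have /andP[h1 h2] := floor_itv x.
rewrite subr_ge0 h1 /= ltrBlDl.
by move: h2; rewrite intrD.
Qed.

Lemma periodic_frac f : periodic1 f -> forall x, f x = f (x - (Num.floor x)%:~R).
Proof. by move=> pf x; rewrite -mulrNz (periodicZ pf). Qed.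

Lemma C_max f : continuous f -> periodic1 f -> exists c, forall x, f x <= f c.
Proof.
move=> cf pf.
have [c _ hc] := @EVT_max R f 0 1 ler01 (continuous_subspaceT cf).
exists c => x; rewrite [f x](periodic_frac pf); apply: hc.
have /andP[h1 h2] := frac_itv x.
by rewrite in_itv /= h1 ltW.
Qed.

Lemma C_min f : continuous f -> periodic1 f -> exists c, forall x, f c <= f x.
Proof.
move=> cf pf.
have [c _ hc] := @EVT_min R f 0 1 ler01 (continuous_subspaceT cf).
exists c => x; rewrite [f x](periodic_frac pf); apply: hc.
have /andP[h1 h2] := frac_itv x.
by rewrite in_itv /= h1 ltW.
Qed.

Lemma C_bounded f : continuous f -> periodic1 f -> exists M, forall x, `|f x| <= M.
Proof.
move=> cf pf.
have cnf : continuous (fun x => `|f x|).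
  by move=> x; apply: (continuous_comp (cf x)); exact: norm_continuous.
have pnf : periodic1 (fun x => `|f x|) by move=> x; rewrite pf.
by have [c hc] := C_max cnf pnf; exists `|f c|.
Qed.

Lemma unif_on_seg (f : R -> R) (a b : R) : continuous f -> forall e, 0 < e ->
  exists2 d, 0 < d & forall x, a <= x <= b -> forall y, `|x - y| < d -> `|f x - f y| < e.
Proof.
move=> cf e e0.
pose P := fun (d : R) (x : R) => forall y, `|x - y| < d -> `|f x - f y| < e.
have H : \forall d \near (0:R)^'+, `[a,b] `<=` P d.
  apply: (proj1 (compact_near_coveringP _) (@segment_compact R a b)).
  move=> x _.
  have e20 : 0 < e/2 by rewrite divr_gt0.
  have /cvgrPdist_lt/(_ (e/2) e20) := cf x.
  move=> /nbhs_ballP[r /= r0 hr].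
  have r20 : 0 < r/2 by rewrite divr_gt0.
  near=> x' d => y hy.
  have hx' : `|x - x'| < r/2 by near: x'; apply/nbhs_ballP; exists (r/2) => //=.
  have hd : d < r/2 by near: d; exact: nbhs_right_lt r20.
  have h1 : `|f x - f x'| < e/2 by apply: hr; rewrite /ball /= (lt_trans hx') // ltr_pdivrMr // ltr_pMr // ltr1n.
  have h2 : `|f x - f y| < e/2.
    apply: hr; rewrite /ball /=.
    have -> : x - y = (x - x') + (x' - y) by ring.
    rewrite (le_lt_trans (ler_normD _ _)) //.
    by rewrite [r]splitr ltrD // (lt_trans hy).
  have -> : f x' - f y = (f x - f y) - (f x - f x') by ring. 
  rewrite (le_lt_trans (ler_normB _ _)) // [e]splitr ltrD //.
near (0:R)^'+ => d.
exists d; first by near: d; exact: nbhs_right_gt.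
move=> x hx y hy.
have : `[a,b] `<=` P d by near: d; exact: H.
by move/(_ x); apply => //; rewrite /= in_itv /=.
Unshelve. all: by end_near.
Qed.

Lemma C_unif f : continuous f -> periodic1 f -> forall e, 0 < e ->
  exists2 d, 0 < d & forall x y, `|x - y| < d -> `|f x - f y| < e.
Proof.
move=> cf pf e e0.
have [d d0 hd] := unif_on_seg 0 1 cf e0.
exists d => // x y hxy.
rewrite (periodic_frac pf x) -(periodicZ pf (- Num.floor x) y) mulrNz.
apply: hd; first by have /andP[h1 h2] := frac_itv x; rewrite h1 ltW.
suff -> : forall k : R, x - k - (y - k) = x - y by []. by move=> k; ring.
Qed.

End Basics.

Section Ops.
Context {R : realType}.
Implicit Types (f g : R -> R).

Definition Uop g : R -> R := fun y => (g (y/2) + g ((y+1)/2)) / 2.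

Lemma cont_comp g (h : R -> R) : continuous h -> continuous g -> continuous (fun y : R => g (h y)).
Proof. by move=> ch cg x; apply: (continuous_comp (f:=h)); [exact: ch | exact: cg]. Qed.

Lemma cont_half g : continuous g -> continuous (fun y : R => g (y/2)).
Proof.
apply: (@cont_comp g (fun y : R => y/2)) => x; apply: cvgM; [exact: cvg_id | exact: cvg_cst].
Qed.

Lemma cont_half1 g : continuous g -> continuous (fun y : R => g ((y+1)/2)).
Proof.
apply: (@cont_comp g (fun y : R => (y+1)/2)) => x; apply: cvgM; last exact: cvg_cst.
by apply: cvgD; [exact: cvg_id | exact: cvg_cst].
Qed.

Lemma cont_shiftl g (t : R) : continuous g -> continuous (fun y : R => g (t + y)).
Proof.
by apply: (@cont_comp g (fun y : R => t + y)) => x; apply: cvgD; [exact: cvg_cst | exact: cvg_id].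
Qed.

Lemma cont_scale g (c : R) : continuous g -> continuous (fun y : R => g (c * y)).
Proof.
by apply: (@cont_comp g (fun y : R => c * y)) => x; apply: cvgM; [exact: cvg_cst | exact: cvg_id].
Qed.

Lemma cont_U g : continuous g -> continuous (Uop g).
Proof.
move=> cg x; apply: cvgM; last exact: cvg_cst.
by apply: cvgD; [exact: cont_half | exact: cont_half1].
Qed.

Lemma C_U g : continuous g -> periodic1 g -> continuous (Uop g) /\ periodic1 (Uop g).
Proof.
move=> cg pg; split.
  move=> x; apply: cvgM; last exact: cvg_cst.
  by apply: cvgD; [exact: cont_half | exact: cont_half1].
move=> y; rewrite /Uop.
have -> : (y + 1 + 1) / 2 = y / 2 + 1 by field.
by rewrite pg addrC.
Qed.

Lemma C_transfer J g : continuous J -> periodic1 J -> continuous g -> periodic1 g ->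
  continuous (transfer J g) /\ periodic1 (transfer J g).
Proof.
move=> cJ pJ cg pg; split.
  move=> x; apply: cvgD; apply: cvgM.
  - exact: cont_half.
  - exact: cont_half.
  - exact: cont_half1.
  - exact: cont_half1.
move=> y; rewrite /transfer.
have -> : (y + 1 + 1) / 2 = y / 2 + 1 by field.
by rewrite pg pJ addrC.
Qed.

Lemma C_iter (F : (R -> R) -> (R -> R)) g n :
  (forall h, continuous h -> periodic1 h -> continuous (F h) /\ periodic1 (F h)) ->
  continuous g -> periodic1 g ->
  continuous (iter n F g) /\ periodic1 (iter n F g).
Proof.
move=> HF cg pg; elim: n => [|n [c p]] //=.
exact: HF.
Qed.

End Ops.

Lemma holder_cont {R : realType} (J : R -> R) : holder J -> continuous J.
Proof.
move=> [C [a [a0 [a1 [C0 H]]]]] x.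
apply/cvgrPdist_lt => e e0.
have C1 : 0 < C + 1 by rewrite ltr_wpDl.
have eC : 0 < e / (C + 1) by rewrite divr_gt0.
pose d := (e / (C + 1)) `^ a^-1.
have d0 : 0 < d by rewrite powR_gt0.
near=> y.
have hy : `|x - y| < d by near: y; apply/nbhs_ballP; exists d.
rewrite (le_lt_trans (H x y)) //.
have h1 : `|x - y| `^ a < e / (C + 1).
  have -> : e / (C + 1) = d `^ a.
    by rewrite /d -powRrM mulVf ?gt_eqF // powRr1 // ltW.
  by apply: gt0_ltr_powR => //; rewrite ?nnegrE ?ltW.
have h2 : C * `|x - y| `^ a <= C * (e / (C + 1)) by rewrite ler_wpM2l // ltW.
rewrite (le_lt_trans h2) //.
have -> : C * (e / (C + 1)) = e - e / (C + 1) by field; rewrite gt_eqF.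
by rewrite ltrBlDr ltrDl.
Unshelve. all: by end_near.
Qed.

Lemma aff_deriv {R : realType} (b c x : R) :
  derivable (fun z : R => (z + b) * c) x 1 /\ ((fun z : R => (z + b) * c)^`())%classic x = c.
Proof.
have H : is_derive x 1 (fun z : R => (z + b) * c) c.
  have -> : (fun z : R => (z + b) * c) = (fun z => c *: z + b * c).
    by apply: funext => z; rewrite /GRing.scale /=; ring.
  apply: is_derive_eq.
  by rewrite scaler1 addr0.
split; first exact: ex_derive.
rewrite derive1E; exact: derive_val.
Qed.

Section Leb.
Context {R : realType} (g : R -> R) (cg : continuous g).
Notation mu := (@lebesgue_measure R).

Let G (x : R) : R := \int[mu]_(t in `[-1, x]) g t.

Let G_deriv x : -1 < x -> derivable G x 1 /\ (G^`())%classic x = g x.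
Proof.
move=> hx.
apply: (@continuous_FTC1_closed R g (-1) x (x + 1)) => //.
- by rewrite ltrDl ltr01.
- apply: continuous_compact_integrable; first exact: segment_compact.
  exact: continuous_subspaceT.
- exact: cg.
Qed.

Let Gc_deriv (b c x : R) : -1 < (x + b) * c ->
  derivable (fun z : R => G ((z + b) * c)) x 1 /\
  ((fun z : R => G ((z + b) * c))^`())%classic x = g ((x + b) * c) * c.
Proof.
move=> hx.
have [da da'] := aff_deriv b c x.
have [dG dG'] := G_deriv hx.
split.
  apply/derivable1_diffP.
  apply: (differentiable_comp (f := fun z : R => (z + b) * c) (g := G)).
  - exact/derivable1_diffP.
  - exact/derivable1_diffP.
have := derive1_comp da dG.
rewrite /comp => ->.
by rewrite dG' da'.
Qed.

Let H : R -> R := (fun z : R => G ((z + 0) / 2)) + (fun z : R => G ((z + 1) / 2)).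
Let HE z : H z = G ((z + 0) / 2) + G ((z + 1) / 2).
Proof. by []. Qed.


Let H_deriv z : -1 < z -> derivable H z 1 /\ (H^`())%classic z = Uop g z.
Proof.
move=> hz.
have h0 : -1 < (z + 0) / 2 by rewrite addr0; lra.
have h1 : -1 < (z + 1) / 2 by lra.
have [d0 d0'] := @Gc_deriv 0 (2^-1) z h0.
have [d1 d1'] := @Gc_deriv 1 (2^-1) z h1.
split; first exact: derivableD.
rewrite derive1E deriveD; [|exact: d0|exact: d1].
rewrite -[X in X + _]derive1E -[X in _ + X]derive1E d0' d1'.
by rewrite /Uop addr0 [in RHS]mulrDl.
Qed.

Let LRcont (F : R -> R) : (forall z, -1 < z -> derivable F z 1) ->
  derivable_oo_LRcontinuous F 0 1.
Proof.
move=> dF; split.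
- move=> z; rewrite in_itv /= => /andP[z0 _]; apply: dF; lra.
- apply: cvg_at_right_filter; apply: differentiable_continuous.
  by apply/derivable1_diffP; apply: dF; lra.
- apply: cvg_at_left_filter; apply: differentiable_continuous.
  by apply/derivable1_diffP; apply: dF; lra.
Qed.

Lemma leb_U_cc : (\int[mu]_(x in `[0%R, 1%R]) (Uop g x)%:E =
  \int[mu]_(x in `[0%R, 1%R]) (g x)%:E)%E.
Proof.
rewrite (@continuous_FTC2 R (Uop g) H 0 1 ltr01).
- rewrite (@continuous_FTC2 R g G 0 1 ltr01).
  + rewrite -!EFinB !HE; congr EFin.
    have -> : ((1:R) + 0) / 2 = (0 + 1) / 2 by rewrite addr0 add0r.
    have -> : ((1:R) + 1) / 2 = 1 by field.
    have -> : ((0:R) + 0) / 2 = 0 by rewrite addr0 mul0r.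
    ring.
  + exact: continuous_subspaceT.
  + by apply: LRcont => z hz; have [] := G_deriv hz.
  + by move=> z; rewrite in_itv /= => /andP[z0 _]; have [] := @G_deriv z ltac:(lra).
- exact/continuous_subspaceT/cont_U.
- by apply: LRcont => z hz; have [] := H_deriv hz.
- by move=> z; rewrite in_itv /= => /andP[z0 _]; have [] := @H_deriv z ltac:(lra).
Qed.

Lemma leb_U : \int[mu]_(x in `[(0:R), (1:R)[) Uop g x = \int[mu]_(x in `[(0:R), (1:R)[) g x.
Proof.
rewrite /Rintegral integral_itv_bndo_bndc; last first.
  apply/measurable_realfun.measurable_EFinP; apply: (measurable_funS _ _ (measurable_realfun.continuous_measurable_fun (cont_U cg))) => //.
rewrite [in RHS]integral_itv_bndo_bndc; last first.
  apply/measurable_realfun.measurable_EFinP; apply: (measurable_funS _ _ (measurable_realfun.continuous_measurable_fun cg)) => //.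
by rewrite leb_U_cc.
Qed.

End Leb.

Lemma cont_Uiter {R : realType} (g : R -> R) m : continuous g -> continuous (iter m (@Uop R) g).
Proof. by move=> cg; elim: m => //= m IH; exact: cont_U. Qed.

Lemma leb_Uiter {R : realType} (g : R -> R) m : continuous g ->
  \int[lebesgue_measure]_(x in `[(0:R), (1:R)[) iter m (@Uop R) g x =
  \int[lebesgue_measure]_(x in `[(0:R), (1:R)[) g x.
Proof.
move=> cg; elim: m => //= m IH.
by rewrite leb_U //; exact: cont_Uiter.
Qed.


Section MuInt.
Context {R : realType} (mu : probability R R).
Implicit Types (g h : R -> R).

Lemma mu_integrable g : continuous g -> (exists M, forall x, `|g x| <= M) ->
  mu.-integrable setT (EFin \o g).
Proof.
move=> cg [M hM].
apply: measurable_bounded_integrable => //.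
-
 have P1 := probability_setT mu. Fail rewrite P1. by move: P1 => /= ->; rewrite ltry.
- exact: measurable_realfun.continuous_measurable_fun.
- exists M; split; first by rewrite num_real.
  by move=> N hN x _ /=; rewrite (le_trans (hM x)) // ltW.
Qed.

Lemma mu_Rint_cst (a : R) : \int[mu]_(y in setT) a = a.
Proof. by rewrite Rintegral_cst //; move: (probability_setT mu) => /= ->; rewrite mulr1. Qed.

Lemma mu_Rint_le g (lo hi : R) : continuous g -> (forall y, lo <= g y <= hi) ->
  lo <= \int[mu]_(y in setT) g y <= hi.
Proof.
move=> cg hg.
have ig : mu.-integrable setT (EFin \o g).
  apply: mu_integrable => //; exists (`|lo| + `|hi|) => x.
  have /andP[h1 h2] := hg x.
  rewrite ler_norml; apply/andP; split.
    rewrite (le_trans _ h1) // lerNl (le_trans (ler_norm _)) // ?normrN.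
    by rewrite -normrN lerDl.
  by rewrite (le_trans h2) // (le_trans (ler_norm _)) // lerDr.
have ic (c : R) : mu.-integrable setT (EFin \o (fun _ : R => c)).
  by apply: mu_integrable; [exact: cst_continuous | exists `|c|].
apply/andP; split.
  rewrite -{1}(mu_Rint_cst lo); apply: le_Rintegral => //.
  by move=> y _; have /andP[] := hg y.
rewrite -[X in _ <= X](mu_Rint_cst hi); apply: le_Rintegral => //.
by move=> y _; have /andP[] := hg y.
Qed.

Lemma mu_Rint_near g (a e : R) : continuous g -> (forall y, `|g y - a| <= e) ->
  `|\int[mu]_(y in setT) g y - a| <= e.
Proof.
move=> cg hg.
have := @mu_Rint_le g (a - e) (a + e) cg.
have H : forall y, a - e <= g y <= a + e.
  by move=> y; have := hg y; rewrite ler_norml; move=> /andP[h1 h2]; apply/andP; split; lra.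
move=> /(_ H) /andP[h1 h2].
by rewrite ler_norml; apply/andP; split; lra.
Qed.


Lemma mu_Rint_norm g (e : R) : continuous g -> (forall y, `|g y| <= e) ->
  `|\int[mu]_(y in setT) g y| <= e.
Proof.
move=> cg hg; rewrite -[X in `|X|]subr0; apply: mu_Rint_near => // y.
by rewrite subr0.
Qed.

Definition Pop g : R -> R := fun x => \int[mu]_y g (x + y).

Lemma conv_iter n g : conv_int mu n g = iter n Pop g 0.
Proof. by elim: n g => //= n IH g; rewrite IH -iterSr. Qed.

Lemma C_P g : continuous g -> periodic1 g -> continuous (Pop g) /\ periodic1 (Pop g).
Proof.
move=> cg pg.
have [M hM] := C_bounded cg pg.
have ish t : continuous (fun y => g (t + y)) by exact: cont_shiftl.
have ishb t : exists M, forall y, `|g (t + y)| <= M by exists M.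
split; last first.
  by move=> x; apply: eq_Rintegral => y _; rewrite addrAC pg.
move=> x; apply/cvgrPdist_le => e e0.
have [d d0 hd] := C_unif cg pg e0.
near=> x'.
have hx : `|x - x'| < d by near: x'; apply/nbhs_ballP; exists d.
rewrite /Pop -RintegralB //; try exact: mu_integrable.
apply: mu_Rint_norm.
  by move=> y; apply: cvgB; [exact: ish | exact: ish].
move=> y; rewrite ltW // hd //.
by have -> : x + y - (x' + y) = x - x' by ring.
Unshelve. all: by end_near.
Qed.

Lemma P_near g (a e : R) : continuous g -> periodic1 g -> (forall y, `|g y - a| <= e) ->
  forall x, `|Pop g x - a| <= e.
Proof. by move=> cg pg hg x; apply: mu_Rint_near; [exact: cont_shiftl | move=> y; exact: hg]. Qed.

Lemma C_Piter n g : continuous g -> periodic1 g ->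
  continuous (iter n Pop g) /\ periodic1 (iter n Pop g).
Proof. by move=> cg pg; apply: C_iter => // h ch ph; exact: C_P. Qed.

Lemma Piter_near n g (a e : R) : continuous g -> periodic1 g -> (forall y, `|g y - a| <= e) ->
  forall x, `|iter n Pop g x - a| <= e.
Proof.
move=> cg pg hg; elim: n => //= n IH.
have [c p] := C_Piter n cg pg.
exact: P_near.
Qed.

Lemma P_add g1 g2 : continuous g1 -> periodic1 g1 -> continuous g2 -> periodic1 g2 ->
  Pop (fun x => g1 x + g2 x) = (fun x => Pop g1 x + Pop g2 x).
Proof.
move=> c1 p1 c2 p2; apply: funext => x.
have [M1 h1] := C_bounded c1 p1.
have [M2 h2] := C_bounded c2 p2.
rewrite /Pop RintegralD //; apply: mu_integrable.
- exact: cont_shiftl.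
- by exists M1.
- exact: cont_shiftl.
- by exists M2.
Qed.

Lemma Piter_add n g1 g2 : continuous g1 -> periodic1 g1 -> continuous g2 -> periodic1 g2 ->
  iter n Pop (fun x => g1 x + g2 x) = (fun x => iter n Pop g1 x + iter n Pop g2 x).
Proof.
move=> c1 p1 c2 p2; elim: n => [|n IH] //=.
rewrite IH.
have [c1' p1'] := C_Piter n c1 p1.
have [c2' p2'] := C_Piter n c2 p2.
exact: P_add.
Qed.

Lemma gibbs_iter J : continuous J -> periodic1 J -> gibbs J mu ->
  forall m g, continuous g -> periodic1 g ->
  \int[mu]_y iter m (transfer J) g y = \int[mu]_y g y.
Proof.
move=> cJ pJ [_ hG] m g cg pg; elim: m => //= m IH.
have [c p] : continuous (iter m (transfer J) g) /\ periodic1 (iter m (transfer J) g).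
  by apply: C_iter => // h ch ph; exact: C_transfer.
by rewrite hG.
Qed.

Definition Qop (s : R) g : R -> R := fun x => \int[mu]_y g (x + s * y).

Lemma cont_Qarg g (x s : R) : continuous g -> continuous (fun y => g (x + s * y)).
Proof.
move=> cg; apply: (cont_comp (g:=g) (h:=fun y => x + s * y)) => // z.
by apply: cvgD; [exact: cvg_cst | apply: cvgM; [exact: cvg_cst | exact: cvg_id]].
Qed.

Lemma UQ s g : continuous g -> periodic1 g -> Uop (Qop s g) = Qop (2 * s) (Uop g).
Proof.
move=> cg pg; apply: funext => z.
have [M hM] := C_bounded cg pg.
rewrite /Uop /Qop -RintegralD //; last 2 first.
- by apply: mu_integrable; [exact: cont_Qarg | exists M].
- by apply: mu_integrable; [exact: cont_Qarg | exists M].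
rewrite -RintegralZr //; last first.
  apply: mu_integrable; first by move=> y; apply: cvgD; exact: cont_Qarg.
  by exists (M + M) => y; rewrite (le_trans (ler_normD _ _)) // lerD.
apply: eq_Rintegral => y _.
have -> : z / 2 + s * y = (z + 2 * s * y) / 2 by field.
by have -> : (z + 1) / 2 + s * y = (z + 2 * s * y + 1) / 2 by field.
Qed.

Lemma UQiter m h : continuous h -> periodic1 h ->
  iter m (@Uop R) (Pop h) = Qop (2 ^+ m) (iter m (@Uop R) h).
Proof.
move=> ch ph; elim: m => [|m IH] /=.
  by apply: funext => x; apply: eq_Rintegral => y _; rewrite mul1r.
have [c p] : continuous (iter m (@Uop R) h) /\ periodic1 (iter m (@Uop R) h).
  by apply: C_iter => // k ck pk; exact: C_U.
by rewrite IH UQ // exprS.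
Qed.

Lemma U_P_zero m h : continuous h -> periodic1 h -> (forall z, iter m (@Uop R) h z = 0) ->
  forall z, iter m (@Uop R) (Pop h) z = 0.
Proof.
move=> ch ph h0 z; rewrite UQiter //.
rewrite /Qop -(mu_Rint_cst 0); apply: eq_Rintegral => y _; exact: h0.
Qed.

Lemma U_Piter_zero n m h : continuous h -> periodic1 h -> (forall z, iter m (@Uop R) h z = 0) ->
  forall z, iter m (@Uop R) (iter n Pop h) z = 0.
Proof.
move=> ch ph h0; elim: n => //= n IH.
have [c p] := C_Piter n ch ph.
exact: U_P_zero.
Qed.

End MuInt.

Section Ushift.
Context {R : realType}.
Implicit Types (g h : R -> R).

Lemma U_shift h (t : R) : Uop (fun y => h (y + t)) = fun z => Uop h (z + 2 * t).
Proof.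
apply: funext => z; rewrite /Uop.
have -> : z / 2 + t = (z + 2 * t) / 2 by field.
by have -> : (z + 1) / 2 + t = (z + 2 * t + 1) / 2 by field.
Qed.

Lemma Uiter_shift m h (t : R) :
  iter m (@Uop R) (fun y => h (y + t)) = fun z => iter m (@Uop R) h (z + 2 ^+ m * t).
Proof.
elim: m => [|m IH] /=; first by apply: funext => z; rewrite expr0 mul1r.
by rewrite IH U_shift; apply: funext => z; rewrite exprS mulrA.
Qed.

Lemma U_idem h : periodic1 h -> Uop (fun x => h (2 * x)) = h.
Proof.
move=> ph; apply: funext => z; rewrite /Uop.
have -> : 2 * (z / 2) = z by field.
have -> : 2 * ((z + 1) / 2) = z + 1 by field.
by rewrite ph; field.
Qed.

Lemma Uiter_idem m h : periodic1 h -> iter m (@Uop R) (fun x => h (2 ^+ m * x)) = h.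
Proof.
elim: m h => [|m IH] h ph /=; first by apply: funext => x; rewrite expr0 mul1r.
have -> : (fun x => h (2 ^+ m.+1 * x)) = (fun x => (fun w => h (2 * w)) (2 ^+ m * x)).
  by apply: funext => x; rewrite exprS mulrA.
rewrite (IH (fun w => h (2 * w))); first exact: U_idem.
by move=> w; rewrite mulrDr mulr1 -[2]/(1 + 1) addrA !ph.
Qed.

Lemma U_bound h (K : R) : (forall x, `|h x| <= K) -> forall y, `|Uop h y| <= K.
Proof.
move=> hK y; rewrite /Uop.
have := hK (y / 2); have := hK ((y + 1) / 2).
rewrite !ler_norml => /andP[a1 a2] /andP[b1 b2].
by apply/andP; split; lra.
Qed.

Lemma Uiter_bound m h (K : R) : (forall x, `|h x| <= K) -> forall y, `|iter m (@Uop R) h y| <= K.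
Proof. by move=> hK; elim: m => //= m IH; exact: U_bound. Qed.

Lemma U_modulus h (d e : R) : (forall x y, `|x - y| < d -> `|h x - h y| < e) ->
  forall x y, `|x - y| < 2 * d -> `|Uop h x - Uop h y| < e.
Proof.
move=> hm x y hxy; rewrite /Uop.
have h1 := hm (x / 2) (y / 2).
have h2 := hm ((x + 1) / 2) ((y + 1) / 2).
move: hxy; rewrite ltr_norml => /andP[c1 c2].
have e1 : `|x / 2 - y / 2| < d by rewrite ltr_norml; apply/andP; split; lra.
have e2 : `|(x + 1) / 2 - (y + 1) / 2| < d by rewrite ltr_norml; apply/andP; split; lra.
have := h1 e1; have := h2 e2.
rewrite !ltr_norml => /andP[a1 a2] /andP[b1 b2].
by apply/andP; split; lra.
Qed.

Lemma Uiter_modulus m h (d e : R) : (forall x y, `|x - y| < d -> `|h x - h y| < e) ->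
  forall x y, `|x - y| < 2 ^+ m * d -> `|iter m (@Uop R) h x - iter m (@Uop R) h y| < e.
Proof.
move=> hm; elim: m => [|m IH] /=; first by move=> x y; rewrite expr0 mul1r; exact: hm.
by move=> x y hxy; apply: (U_modulus IH); rewrite mulrA -exprS.
Qed.

End Ushift.

Section Doeblin.
Context {R : realType} (J : R -> R) (eta : R).
Hypothesis eta0 : 0 < eta.
Hypothesis Jeta : forall x, eta <= J x.
Hypothesis J1 : forall y, J (y / 2) + J ((y + 1) / 2) = 1.

Lemma L_bound (r : R -> R) (K : R) : (forall x, `|r x| <= K) -> forall y, `|transfer J r y| <= K.
Proof.
move=> hK y.
have -> : transfer J r y = J (y / 2) * r (y / 2) + J ((y + 1) / 2) * r ((y + 1) / 2) by [].
have := hK (y / 2); have := hK ((y + 1) / 2).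
have := Jeta (y / 2); have := Jeta ((y + 1) / 2); have := J1 y.
rewrite !ler_norml => s j2 j1 /andP[a1 a2] /andP[b1 b2].
have e0 := eta0.
have Pm (a b : R) : 0 <= a -> 0 <= b -> 0 <= a * b by move=> *; apply: mulr_ge0.
have p1 : 0 <= J (y / 2) * (K - r (y / 2))  by apply: Pm; lra.
have p2 : 0 <= J (y / 2) * (r (y / 2) + K) by apply: Pm; lra.
have p3 : 0 <= J ((y + 1) / 2) * (K - r ((y + 1) / 2)) by apply: Pm; lra.
have p4 : 0 <= J ((y + 1) / 2) * (r ((y + 1) / 2) + K) by apply: Pm; lra.
by apply/andP; split; nra.
Qed.

Lemma LU_bound (q : R -> R) (K : R) : (forall x, `|q x| <= K) ->
  forall y, `|transfer J q y - 2 * eta * Uop q y| <= (1 - 2 * eta) * K.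
Proof.
move=> hK y.
have -> : transfer J q y = J (y / 2) * q (y / 2) + J ((y + 1) / 2) * q ((y + 1) / 2) by [].
rewrite /Uop.
have := hK (y / 2); have := hK ((y + 1) / 2).
have := Jeta (y / 2); have := Jeta ((y + 1) / 2); have := J1 y.
rewrite !ler_norml => s j2 j1 /andP[a1 a2] /andP[b1 b2].
have e0 := eta0.
have Pm (a b : R) : 0 <= a -> 0 <= b -> 0 <= a * b by move=> *; apply: mulr_ge0.
have p1 : 0 <= (J (y / 2) - eta) * (K - q (y / 2)) by apply: Pm; lra.
have p2 : 0 <= (J (y / 2) - eta) * (q (y / 2) + K) by apply: Pm; lra.
have p3 : 0 <= (J ((y + 1) / 2) - eta) * (K - q ((y + 1) / 2)) by apply: Pm; lra.
have p4 : 0 <= (J ((y + 1) / 2) - eta) * (q ((y + 1) / 2) + K) by apply: Pm; lra.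
by apply/andP; split; nra.
Qed.

Lemma eta_le : 2 * eta <= 1.
Proof. by have := J1 0; have := Jeta (0 / 2); have := Jeta ((0 + 1) / 2); lra. Qed.

Lemma doeblin m (g : R -> R) (K : R) : (forall x, `|g x| <= K) ->
  forall y, `|iter m (transfer J) g y - (2 * eta) ^+ m * iter m (@Uop R) g y|
            <= (1 - (2 * eta) ^+ m) * K.
Proof.
move=> hK; elim: m => [|m IH] y /=.
  by rewrite expr0 mul1r subrr normr0 subrr mul0r.
set c := (2 * eta) ^+ m.
have c0 : 0 <= c by rewrite exprn_ge0 // mulr_ge0 // ltW.
have c1 : c <= 1 by rewrite exprn_ile1 // ?eta_le // mulr_ge0 // ltW.
set Lm := iter m (transfer J) g.
set Um := iter m (@Uop R) g.
have hU : forall x, `|Um x| <= K by exact: Uiter_bound.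
pose r := fun x => Lm x - c * Um x.
have hr : forall x, `|r x| <= (1 - c) * K by exact: IH.
have e1 := L_bound hr y.
have e2 := LU_bound hU y.
have -> : transfer J Lm y - (2 * eta) ^+ m.+1 * Uop Um y =
  transfer J r y + c * (transfer J Um y - 2 * eta * Uop Um y).
  by rewrite /transfer /r exprS -/c; ring.
rewrite (le_trans (ler_normD _ _)) // normrM (ger0_norm c0).
have := ler_wpM2l c0 e2.
move: e1; rewrite exprS -/c.
set A := `|transfer J r y|; set B := `|_ - _|.
by move=> e1 e3; nra.
Qed.

End Doeblin.

Section Fin.
Context {R : realType}.
Notation leb := (@lebesgue_measure R).

Lemma leb_int01 (g : R -> R) : continuous g -> leb.-integrable `[(0:R), (1:R)[ (EFin \o g).
Proof.
move=> cg.
have hi : leb.-integrable `[(0:R), (1:R)] (EFin \o g).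
  apply: continuous_compact_integrable; first exact: segment_compact.
  exact: continuous_subspaceT.
apply: integrableS hi => //.
exact/subset_itvP/subset_itv_co_cc.
Qed.

Lemma leb_cst (a : R) : \int[leb]_(x in `[(0:R), (1:R)[) a = a.
Proof.
rewrite Rintegral_cst //.
move: (lebesgue_measure_itv `[(0:R), (1:R)[) => /= ->.
rewrite lte_fin ltr01 /=.
by rewrite subr0 mulr1.
Qed.

Lemma leb_near (g : R -> R) (a e : R) : continuous g -> (forall y, `|g y - a| <= e) ->
  `|\int[leb]_(x in `[(0:R), (1:R)[) g x - a| <= e.
Proof.
move=> cg hg.
have H : forall y, a - e <= g y <= a + e.
  by move=> y; have := hg y; rewrite ler_norml; move=> /andP[h1 h2]; apply/andP; split; lra.
have h1 : a - e <= \int[leb]_(x in `[(0:R), (1:R)[) g x.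
  rewrite -[X in X <= _]leb_cst; apply: le_Rintegral => //.
  - by apply: (@leb_int01 (fun _ => _)); exact: cst_continuous.
  - exact: leb_int01.
  - by move=> y _; have /andP[] := H y.
have h2 : \int[leb]_(x in `[(0:R), (1:R)[) g x <= a + e.
  rewrite -[X in _ <= X]leb_cst; apply: le_Rintegral => //.
  - exact: leb_int01.
  - by apply: (@leb_int01 (fun _ => _)); exact: cst_continuous.
  - by move=> y _; have /andP[] := H y.
by rewrite ler_norml; apply/andP; split; lra.
Qed.

Lemma U_sub (f g : R -> R) : Uop (fun x => f x - g x) = fun z => Uop f z - Uop g z.
Proof. by apply: funext => z; rewrite /Uop; field. Qed.

Lemma Uiter_sub m (f g : R -> R) :
  iter m (@Uop R) (fun x => f x - g x) = fun z => iter m (@Uop R) f z - iter m (@Uop R) g z.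
Proof. by elim: m => //= m ->; rewrite U_sub. Qed.

End Fin.

Lemma P_contract {R : realType} (J : R -> R) (mu : probability R R) (eta : R) :
  continuous J -> periodic1 J -> gibbs J mu -> 0 < eta -> (forall x, eta <= J x) ->
  (forall y, J (y / 2) + J ((y + 1) / 2) = 1) ->
  forall m (h : R -> R) (K : R), continuous h -> periodic1 h ->
  (forall z, iter m (@Uop R) h z = 0) -> (forall x, `|h x| <= K) ->
  forall x, `|Pop mu h x| <= (1 - (2 * eta) ^+ m) * K.
Proof.
move=> cJ pJ gb eta0 Jeta J1 m h K ch ph h0 hK x.
have chx : continuous (fun y => h (y + x)).
  apply: (cont_comp (g:=h) (h:=fun y => y + x)) => // z.
  by apply: cvgD; [exact: cvg_id | exact: cvg_cst].
have phx : periodic1 (fun y => h (y + x)) by move=> y; rewrite addrAC ph.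
have -> : Pop mu h x = \int[mu]_y iter m (transfer J) (fun y => h (y + x)) y.
  rewrite (gibbs_iter cJ pJ gb) //.
  by apply: eq_Rintegral => y _; rewrite addrC.
have [cL _] := @C_iter R (transfer J) (fun y => h (y + x)) m
  (fun k ck pk => C_transfer cJ pJ ck pk) chx phx.
apply: mu_Rint_norm => //.
move=> y.
have := @doeblin R J eta eta0 Jeta J1 m (fun y => h (y + x)) K (fun z => hK _) y.
by rewrite Uiter_shift h0 mulr0 subr0.
Qed.

Unset Implicit Arguments.
Set Strict Implicit.

Theorem theorem4 (R : realType) (J : R -> R) (mu : probability R R) :
  (forall x, 0 < J x) -> periodic1 J -> holder J ->
  (forall y, J (y / 2) + J ((y + 1) / 2) = 1) ->
  gibbs J mu ->
  forall phi : R -> R, continuous phi -> periodic1 phi ->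
    (fun n => conv_int mu n phi) @ \oo -->
      \int[lebesgue_measure]_(x in `[0, 1[) phi x.
Proof.
move=> Jpos pJ hJ J1 gb phi cphi pphi.
have cJ := holder_cont hJ.
have [c0 hc0] := C_min cJ pJ.
pose eta := J c0.
have eta0 : 0 < eta := Jpos c0.
have Jeta : forall x, eta <= J x := hc0.
have -> : (fun n => conv_int mu n phi) = (fun n => iter n (Pop mu) phi 0).
  by apply: funext => n; exact: conv_iter.
apply/cvgrPdist_le => e e0.
have e30 : 0 < e / 3 by rewrite divr_gt0.
have [d d0 hd] := C_unif cphi pphi e30.
pose m := (Num.trunc (d^-1)).+1.
have hm : 1 < 2 ^+ m * d.
  have h1 : d^-1 < m%:R by exact: truncnS_gt.
  have h2 : m%:R < 2 ^+ m :> R.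
    by rewrite -[2]/(2%:R) -natrX ltr_nat ltn_expl.
  have h3 : d^-1 * d < 2 ^+ m * d by rewrite ltr_pM2r // (lt_trans h1 h2).
  by rewrite mulVf ?gt_eqF in h3.
pose psi := iter m (@Uop R) phi.
have [cpsi ppsi] : continuous psi /\ periodic1 psi.
  by apply: C_iter => // k ck pk; exact: C_U.
pose a := psi 0.
have hpsi : forall z, `|psi z - a| <= e / 3.
  move=> z; rewrite (periodic_frac ppsi z) /a /psi.
  apply: ltW; apply: (Uiter_modulus hd).
  have /andP[f1 f2] := frac_itv z.
  by rewrite subr0 ger0_norm // (lt_trans f2 hm).
have hIa : `|\int[lebesgue_measure]_(x in `[0, 1[) phi x - a| <= e / 3.
  by rewrite -(leb_Uiter m cphi); exact: leb_near.
pose A := fun x => psi (2 ^+ m * x).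
have cA : continuous A by exact: cont_scale.
have pA : periodic1 A.
  move=> x; rewrite /A mulrDr mulr1.
  have -> : (2 ^+ m : R) = (2 ^ m)%:R by rewrite natrX.
  exact: periodicN.
have hA : forall x, `|A x - a| <= e / 3 by move=> x; exact: hpsi.
pose h := fun x => phi x - A x.
have ch : continuous h by move=> x; apply: cvgB; [exact: cphi | exact: cA].
have ph : periodic1 h by move=> x; rewrite /h pphi pA.
have h0 : forall z, iter m (@Uop R) h z = 0.
  by move=> z; rewrite /h Uiter_sub (Uiter_idem m ppsi) subrr.
have [K hK] := C_bounded ch ph.
pose c := (2 * eta) ^+ m.
have c0' : 0 < c by rewrite exprn_gt0 // mulr_gt0.
have c1 : c <= 1 by rewrite exprn_ile1 // ?(eta_le Jeta J1) // mulr_ge0 // ltW.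
have hcontr : forall n x, `|iter n (Pop mu) h x| <= (1 - c) ^+ n * K.
  elim=> [|n IH] x /=; first by rewrite expr0 mul1r.
  have [cn pn] := C_Piter mu n ch ph.
  rewrite exprS -mulrA.
  apply: (P_contract cJ pJ gb eta0 Jeta J1) => //.
  exact: U_Piter_zero.
have hcv : ((1 - c) ^+ n * K) @[n --> \oo] --> (0 : R).
  rewrite -(mul0r K); apply: cvgMl; apply: cvg_expr.
  by rewrite ger0_norm; lra.
move/cvgrPdist_le : hcv => /(_ (e / 3) e30) hN.
near=> n.
have hn : `|0 - (1 - c) ^+ n * K| <= e / 3 by near: n; exact: hN.
have -> : iter n (Pop mu) phi 0 = iter n (Pop mu) h 0 + iter n (Pop mu) A 0.
  have -> : phi = (fun x => h x + A x) by apply: funext => x; rewrite /h subrK.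
  by rewrite Piter_add.
have t1 : `|iter n (Pop mu) h 0| <= e / 3.
  by rewrite (le_trans (hcontr n 0)) // (le_trans _ hn) // distrC subr0 ler_norm.
have t2 := Piter_near mu n cA pA hA 0.
move: hIa t1 t2; set I := \int[lebesgue_measure]_(x in _) _.
set x1 := iter n (Pop mu) h 0; set x2 := iter n (Pop mu) A 0.
rewrite !ler_norml => /andP[u1 u2] /andP[v1 v2] /andP[w1 w2].
by apply/andP; split; lra.
Unshelve. all: by end_near.
Qed.
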